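(* Let $\mathcal{H}$ be a separable complex Hilbert space, $A\in\mathcal{B}(\mathcal{H})$, and $g\in\mathrm{ran}A$. Let $(u_n)_{n\in\mathbb{N}}$ and $(v_n)_{n\in\mathbb{N}}$ be orthonormal bases of $\mathcal{H}$, and for each $N$ let $A_N$ and $g_N$ be as defined in the context. Then there exists a sequence $(f^{(N)})_{N\in\mathbb{N}}$ with $f^{(N)}\in\mathbb{C}^N$ for each $N$ such that \[\lim_{N\to\infty}\|A_Nf^{(N)}-g_N\|_{\mathbb{C}^N}=0.\]
   Context: For orthonormal bases $(u_n)$, $(v_n)$ of $\mathcal{H}$ and $N\in\mathbb{N}$: $A_N$ is the $N\times N$ matrix with entries $(A_N)_{ij}=\langle v_i,Au_j\rangle$ for $i,j\in\{1,\dots,N\}$, and $g_N=(\langle v_1,g\rangle,\dots,\langle v_N,g\rangle)\in\mathbb{C}^N$. The inner product is antilinear in the first entry. $\mathcal{B}(\mathcal{H})$ denotes the bounded everywhere defined linear operators on $\mathcal{H}$. *)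

(* Defs.v *)
From Stdlib Require Import Reals.
Open Scope R_scope.

Record Cplx := mkC { Re : R; Im : R }.

Definition C0 : Cplx := mkC 0 0.
Definition C1 : Cplx := mkC 1 0.
Definition Cadd (z w : Cplx) : Cplx := mkC (Re z + Re w) (Im z + Im w).
Definition Copp (z : Cplx) : Cplx := mkC (- Re z) (- Im z).
Definition Csub (z w : Cplx) : Cplx := Cadd z (Copp w).
Definition Cmul (z w : Cplx) : Cplx :=
  mkC (Re z * Re w - Im z * Im w) (Re z * Im w + Im z * Re w).
Definition Cconj (z : Cplx) : Cplx := mkC (Re z) (- Im z).
Definition Cnorm2 (z : Cplx) : R := Re z * Re z + Im z * Im z.
Definition Cnorm (z : Cplx) : R := sqrt (Cnorm2 z).

Fixpoint Csum (n : nat) (f : nat -> Cplx) : Cplx :=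
  match n with O => C0 | S m => Cadd (Csum m f) (f m) end.
Fixpoint Rsum (n : nat) (f : nat -> R) : R :=
  match n with O => 0 | S m => Rsum m f + f m end.

(** * Complex Hilbert spaces
    Inner product antilinear in the first argument, linear in the second. *)
Record CHilbert := {
  hv :> Type;
  hzero : hv;
  hadd : hv -> hv -> hv;
  hscal : Cplx -> hv -> hv;
  hinner : hv -> hv -> Cplx;
  hadd_assoc : forall x y z, hadd x (hadd y z) = hadd (hadd x y) z;
  hadd_comm : forall x y, hadd x y = hadd y x;
  hadd_zero : forall x, hadd x hzero = x;
  hadd_opp : forall x, hadd x (hscal (Copp C1) x) = hzero;
  hscal_one : forall x, hscal C1 x = x;
  hscal_assoc : forall a b x, hscal a (hscal b x) = hscal (Cmul a b) x;
  hscal_distr_v : forall a x y, hscal a (hadd x y) = hadd (hscal a x) (hscal a y);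
  hscal_distr_s : forall a b x, hscal (Cadd a b) x = hadd (hscal a x) (hscal b x);
  hinner_add_r : forall x y z, hinner x (hadd y z) = Cadd (hinner x y) (hinner x z);
  hinner_scal_r : forall a x y, hinner x (hscal a y) = Cmul a (hinner x y);
  hinner_conj : forall x y, hinner y x = Cconj (hinner x y);
  hinner_pos : forall x, Im (hinner x x) = 0 /\ 0 <= Re (hinner x x);
  hinner_def : forall x, hinner x x = C0 -> x = hzero;
  hcomplete : forall s : nat -> hv,
    (forall eps, 0 < eps -> exists N, forall m n, (N <= m)%nat -> (N <= n)%nat ->
       sqrt (Re (hinner (hadd (s m) (hscal (Copp C1) (s n)))
                        (hadd (s m) (hscal (Copp C1) (s n))))) < eps) ->
    exists l, forall eps, 0 < eps -> exists N, forall n, (N <= n)%nat ->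
       sqrt (Re (hinner (hadd (s n) (hscal (Copp C1) l))
                        (hadd (s n) (hscal (Copp C1) l)))) < eps
}.

Arguments hzero {_}.
Arguments hadd {_} _ _.
Arguments hscal {_} _ _.
Arguments hinner {_} _ _.

Section HilbertDefs.
Variable H : CHilbert.

Definition hsub (x y : H) : H := hadd x (hscal (Copp C1) y).
Definition hnorm (x : H) : R := sqrt (Re (hinner x x)).

Definition separable : Prop :=
  exists d : nat -> H, forall (x : H) (eps : R), 0 < eps ->
    exists n, hnorm (hsub x (d n)) < eps.

Definition bounded_linear (A : H -> H) : Prop :=
  (forall x y, A (hadd x y) = hadd (A x) (A y)) /\
  (forall a x, A (hscal a x) = hscal a (A x)) /\
  (exists M, forall x, hnorm (A x) <= M * hnorm x).

Definition in_range (A : H -> H) (g : H) : Prop := exists f, A f = g.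

Definition orthonormal_basis (u : nat -> H) : Prop :=
  (forall i j, hinner (u i) (u j) = if Nat.eqb i j then C1 else C0) /\
  (forall x, (forall n, hinner (u n) x = C0) -> x = hzero).

(** The truncated matrix A_N and vector g_N (indices shifted to 0 .. N-1):
    (A_N)_{ij} = <v_i, A u_j>, (g_N)_i = <v_i, g>.  A vector of C^N is
    represented by f : nat -> C, of which only the entries 0 .. N-1 are used. *)
Definition trunc_mat (A : H -> H) (u v : nat -> H) (i j : nat) : Cplx :=
  hinner (v i) (A (u j)).
Definition trunc_vec (g : H) (v : nat -> H) (i : nat) : Cplx := hinner (v i) g.

Definition trunc_residual (A : H -> H) (u v : nat -> H) (g : H)
    (N : nat) (f : nat -> Cplx) : R :=
  sqrt (Rsum N (fun i =>
    Cnorm2 (Csub (Csum N (fun j => Cmul (trunc_mat A u v i j) (f j)))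
                 (trunc_vec g v i)))).

End HilbertDefs.

Arguments hsub {_} _ _.
Arguments hnorm {_} _.

(* Main.v *)
Require Import Defs.
From Stdlib Require Import Reals.
Open Scope R_scope.
From Stdlib Require Import Lra Lia Psatz Arith.

Lemma Ceq (z w : Cplx) : Re z = Re w -> Im z = Im w -> z = w.
Proof. destruct z, w; simpl; intros; subst; reflexivity. Qed.

Ltac cunf := unfold Csub, Cadd, Copp, Cmul, Cconj, Cnorm2, C0, Defs.C1 in *; simpl in *.
Ltac cring := apply Ceq; cunf; ring.

Lemma Cnorm2_ge0 z : 0 <= Cnorm2 z.
Proof. unfold Cnorm2; nra. Qed.

Lemma Rsum_ext N f g : (forall j, (j < N)%nat -> f j = g j) -> Rsum N f = Rsum N g.
Proof. induction N; simpl; intros; auto. rewrite IHN, H; auto. Qed.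
Lemma Csum_ext N f g : (forall j, (j < N)%nat -> f j = g j) -> Csum N f = Csum N g.
Proof. induction N; simpl; intros; auto. rewrite IHN, H; auto. Qed.
Lemma Re_Csum N f : Re (Csum N f) = Rsum N (fun j => Re (f j)).
Proof. induction N; simpl; auto. unfold Cadd; simpl. rewrite IHN; auto. Qed.
Lemma Rsum_nonneg N f : (forall j, 0 <= f j) -> 0 <= Rsum N f.
Proof. intros Hf; induction N; simpl; [lra|]. specialize (Hf N). lra. Qed.

Lemma sqrt_lt_eps x e : 0 <= x -> x < e * e -> 0 < e -> sqrt x < e.
Proof. intros. rewrite <- (sqrt_square e) by lra. apply sqrt_lt_1_alt; lra. Qed.

Section Hil.
Variable H : CHilbert.

Definition nn (x : H) := Re (hinner x x).

Fixpoint HSum (N : nat) (b : nat -> Cplx) (e : nat -> H) : H :=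
  match N with O => hzero | S m => hadd (HSum m b e) (hscal (b m) (e m)) end.

Definition ON (e : nat -> H) := forall i j, hinner (e i) (e j) = if Nat.eqb i j then Defs.C1 else C0.

Lemma nn_ge0 x : 0 <= nn x.
Proof. unfold nn. apply (hinner_pos H x). Qed.

Lemma inner_zero_r (x : H) : hinner x hzero = C0.
Proof.
  assert (E: hinner x hzero = Cadd (hinner x hzero) (hinner x hzero)).
  { rewrite <- hinner_add_r, hadd_zero. reflexivity. }
  revert E; generalize (hinner x hzero); intros [a b] E.
  unfold Cadd in E; simpl in E. injection E; intros. apply Ceq; simpl; lra.
Qed.

Lemma inner_zero_l (x : H) : hinner hzero x = C0.
Proof. rewrite (hinner_conj H x hzero), inner_zero_r. cring. Qed.

Lemma inner_add_l (x y z : H) : hinner (hadd x y) z = Cadd (hinner x z) (hinner y z).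
Proof.
  rewrite (hinner_conj H z (hadd x y)), hinner_add_r, (hinner_conj H z x), (hinner_conj H z y).
  cring.
Qed.

Lemma inner_scal_l a (x z : H) : hinner (hscal a x) z = Cmul (Cconj a) (hinner x z).
Proof.
  rewrite (hinner_conj H z (hscal a x)), hinner_scal_r, (hinner_conj H z x). cring.
Qed.

Lemma hadd_cancel (x : H) : hadd x x = x -> x = hzero.
Proof.
  intros E. rewrite <- (hadd_opp H x). rewrite <- E at 2.
  rewrite <- hadd_assoc, hadd_opp, hadd_zero. reflexivity.
Qed.

Lemma sub_zero_eq (x y : H) : hsub x y = hzero -> x = y.
Proof.
  unfold hsub; intros E.
  rewrite <- (hadd_zero H x), <- (hadd_opp H y), (hadd_comm H y), hadd_assoc, E,
    hadd_comm, hadd_zero. reflexivity.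
Qed.

Lemma A_HS (A : H -> H) (HA : bounded_linear H A) N b e :
  A (HSum N b e) = HSum N b (fun j => A (e j)).
Proof.
  destruct HA as [Aadd [Ascal _]].
  induction N; simpl.
  - apply hadd_cancel. rewrite <- Aadd, hadd_zero. reflexivity.
  - rewrite Aadd, Ascal, IHN. reflexivity.
Qed.

Lemma inner_HS_r x N b e :
  hinner x (HSum N b e) = Csum N (fun j => Cmul (b j) (hinner x (e j))).
Proof.
  induction N; simpl. apply inner_zero_r.
  rewrite hinner_add_r, hinner_scal_r, IHN. reflexivity.
Qed.

Lemma inner_HS_l x N b e :
  hinner (HSum N b e) x = Csum N (fun j => Cmul (Cconj (b j)) (hinner (e j) x)).
Proof.
  induction N; simpl. apply inner_zero_l.
  rewrite inner_add_l, inner_scal_l, IHN. reflexivity.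
Qed.

Lemma coef e (He : ON e) k N b :
  hinner (e k) (HSum N b e) = if Nat.ltb k N then b k else C0.
Proof.
  rewrite inner_HS_r. induction N; simpl. reflexivity.
  rewrite IHN, He.
  destruct (Nat.ltb_spec k N), (Nat.eqb_spec k N), (Nat.ltb_spec k (S N)); try lia;
   subst; cring.
Qed.

Lemma nn_HS e (He : ON e) N b : nn (HSum N b e) = Rsum N (fun j => Cnorm2 (b j)).
Proof.
  unfold nn. rewrite inner_HS_l, Re_Csum. apply Rsum_ext. intros j Hj.
  rewrite coef by auto. destruct (Nat.ltb_spec j N); try lia. cunf; ring.
Qed.

Lemma inner_HS_HS e (He : ON e) n m b : (n <= m)%nat ->
  Re (hinner (HSum m b e) (HSum n b e)) = Rsum n (fun j => Cnorm2 (b j)).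
Proof.
  intros Hnm. rewrite inner_HS_r, Re_Csum. apply Rsum_ext. intros j Hj.
  rewrite (hinner_conj H (e j)), coef by auto. destruct (Nat.ltb_spec j m); try lia.
  cunf; ring.
Qed.

Lemma nn_expand (x y : H) a :
  nn (hadd x (hscal a y)) = nn x + 2 * Re (Cmul a (hinner x y)) + Cnorm2 a * nn y.
Proof.
  unfold nn. rewrite hinner_add_r, !inner_add_l, !hinner_scal_r, !inner_scal_l.
  rewrite (hinner_conj H x y).
  destruct (hinner_pos H y) as [Hy _].
  revert Hy. generalize (hinner y y) (hinner x y) (hinner x x). intros p q r Hy.
  destruct p, q, r, a. cunf. subst. ring.
Qed.

Lemma nn_sub (x y : H) : nn (hsub x y) = nn x - 2 * Re (hinner x y) + nn y.
Proof. unfold hsub. rewrite nn_expand. cunf. ring. Qed.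

Lemma bessel e (He : ON e) N y :
  Rsum N (fun i => Cnorm2 (hinner (e i) y)) <= nn y.
Proof.
  pose (c := fun i => hinner (e i) y).
  pose proof (nn_ge0 (hsub y (HSum N c e))) as G.
  rewrite nn_sub, nn_HS, inner_HS_r, Re_Csum in G by auto.
  erewrite Rsum_ext in G.
  2:{ intros j Hj. rewrite (hinner_conj H (e j) y). unfold c. cunf. reflexivity. }
  unfold c in G. cunf.
  assert (Rsum N (fun j => Re (hinner (e j) y) * Re (hinner (e j) y) - Im (hinner (e j) y) * - Im (hinner (e j) y))
          = Rsum N (fun i => Re (hinner (e i) y) * Re (hinner (e i) y) + Im (hinner (e i) y) * Im (hinner (e i) y))).
  { apply Rsum_ext; intros; ring. }
  lra.
Qed.

End Hil.

Lemma small0 x : 0 <= x -> (forall e, 0 < e -> x < e) -> x = 0.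
Proof. intros H0 Hx. destruct (Rle_lt_dec x 0). lra. specialize (Hx x r). lra. Qed.

Lemma grow_le (U : nat -> R) : Un_growing U -> forall n m, (n <= m)%nat -> U n <= U m.
Proof. intros G n m Hnm. induction Hnm. lra. specialize (G m). lra. Qed.

Theorem lemma2p2 (H : CHilbert) (HS : separable H)
  (A : H -> H) (HA : bounded_linear H A)
  (g : H) (Hg : in_range H A g)
  (u v : nat -> H) (Hu : orthonormal_basis H u) (Hv : orthonormal_basis H v) :
  exists F : nat -> (nat -> Cplx),
    Un_cv (fun N => trunc_residual H A u v g N (F N)) 0.
Proof.
  destruct Hg as [f Hf]. subst g.
  destruct Hu as [Uon Umax]. destruct Hv as [Von _].
  pose (a := fun j => hinner (u j) f).
  pose (Sn := fun N => HSum H N a u).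
  pose (Rn := fun N => Rsum N (fun j => Cnorm2 (a j))).
  assert (Rb : forall N, Rn N <= nn H f) by (intro N; apply (bessel H u Uon)).
  assert (Rg : Un_growing Rn).
  { intro n. unfold Rn; simpl. pose proof (Cnorm2_ge0 (a n)). lra. }
  assert (Rc : Cauchy_crit Rn).
  { apply CV_Cauchy, growing_cv; auto. exists (nn H f). intros x [i ->]. auto. }
  assert (Dif : forall m n, nn H (hsub (Sn m) (Sn n)) <= Rabs (Rn m - Rn n)).
  { intros m n. rewrite nn_sub. unfold Sn.
    destruct (le_lt_dec n m).
    - rewrite (inner_HS_HS H u Uon n m a l), !(nn_HS H u Uon). unfold Rn.
      apply Req_le. rewrite Rabs_right. ring.
      assert (Rn n <= Rn m) by (apply grow_le; auto). unfold Rn in H0. lra.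
    - rewrite (hinner_conj H (HSum H n a u)).
      replace (Re (Cconj (hinner (HSum H n a u) (HSum H m a u)))) with
        (Re (hinner (HSum H n a u) (HSum H m a u))) by reflexivity.
      rewrite (inner_HS_HS H u Uon m n a) by lia. rewrite !(nn_HS H u Uon). unfold Rn.
      apply Req_le. rewrite Rabs_left1. ring.
      assert (Rn m <= Rn n) by (apply grow_le; auto; lia). unfold Rn in H0. lra. }
  destruct (hcomplete H Sn) as [l Hl].
  { intros eps Heps. destruct (Rc (eps * eps)) as [N HN]. nra.
    exists N. intros m n Hm Hn. apply sqrt_lt_eps; auto. apply (nn_ge0 H (hsub (Sn m) (Sn n))).
    eapply Rle_lt_trans. apply (Dif m n). apply HN; auto. }
  assert (Efl : f = l).
  { apply sub_zero_eq, Umax. intro k.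
    assert (C : Cnorm2 (hinner (u k) (hsub f l)) = 0).
    { apply small0. apply Cnorm2_ge0. intros e He.
      destruct (Hl (sqrt e)) as [N0 HN0]. apply sqrt_lt_R0; auto.
      pose (N := max N0 (S k)).
      specialize (HN0 N ltac:(lia)).
      apply sqrt_lt_0_alt in HN0.
      replace (hinner (u k) (hsub f l)) with (hinner (u k) (hsub (Sn N) l)).
      2:{ unfold hsub, Sn. rewrite !hinner_add_r, !hinner_scal_r, coef by auto.
          destruct (Nat.ltb_spec k N); try lia. reflexivity. }
      eapply Rle_lt_trans. 2: apply HN0.
      eapply Rle_trans. 2: apply (bessel H u Uon (S k)).
      simpl. pose proof (Rsum_nonneg k (fun i => Cnorm2 (hinner (u i) (hsub (Sn N) l)))
           (fun j => Cnorm2_ge0 _)). unfold hsub in *. lra. }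
    revert C. generalize (hinner (u k) (hsub f l)). intros [x y] C. unfold Cnorm2 in C; simpl in C.
    apply Ceq; simpl; nra. }
  rewrite <- Efl in Hl.
  destruct HA as [Aadd [Ascal [M HM]]].
  exists (fun _ => a).
  intros eps Heps.
  destruct (Hl (eps / (Rabs M + 1))) as [N0 HN0].
  { apply Rdiv_lt_0_compat; auto. pose proof (Rabs_pos M). lra. }
  exists N0. intros N HN. specialize (HN0 N HN).
  unfold Rdist. rewrite Rminus_0_r.
  unfold trunc_residual.
  rewrite (Rsum_ext N _ (fun i => Cnorm2 (hinner (v i) (A (hsub (Sn N) f))))).
  2:{ intros i Hi. f_equal. unfold hsub, trunc_mat, trunc_vec, Sn.
      rewrite Aadd, Ascal, hinner_add_r, hinner_scal_r, (A_HS H A (conj Aadd (conj Ascal (ex_intro _ M HM)))), inner_HS_r.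
      rewrite (Csum_ext N _ (fun j => Cmul (a j) (hinner (v i) (A (u j))))).
      2:{ intros; cring. }
      cring. }
  rewrite Rabs_right by (apply Rle_ge, sqrt_pos).
  eapply Rle_lt_trans. apply sqrt_le_1_alt, (bessel H v Von).
  eapply Rle_lt_trans. apply HM.
  fold (hnorm (hsub (Sn N) f)).
  pose proof (sqrt_pos (nn H (hsub (Sn N) f))).
  unfold hnorm, nn in *.
  pose proof (Rle_abs M). pose proof (Rabs_pos M).
  apply Rlt_le_trans with ((Rabs M + 1) * (eps / (Rabs M + 1))).
  2:{ right. field. lra. }
  unfold hsub in *.
  set (h := sqrt _) in *. set (q := eps / (Rabs M + 1)) in *.
  assert (M * h <= (Rabs M + 1) * h) by nra.
  assert ((Rabs M + 1) * h < (Rabs M + 1) * q) by (apply Rmult_lt_compat_l; lra).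
  lra.
Qed.
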